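(* For any finite connected interval graph $G$, $\mathrm{imp}(G)\ge \mathrm{wt}(G)$.
   Context: A finite simple graph $G=(V,E)$ is an interval graph iff there is a representation $\alpha: v\mapsto I_v$ of the vertices by (closed, bounded) intervals of the real line such that $vw\in E$ iff $I_v\cap I_w\neq\emptyset$. For a representation $\alpha$ and a vertex $z$, the impropriety $\mathrm{imp}_\alpha(z)$ is the number of representing intervals $I_w$, $w\neq z$, with $I_w\subseteq I_z$. The impropriety $\mathrm{imp}(\alpha)$ is $\max_z \mathrm{imp}_\alpha(z)$, and $\mathrm{imp}(G)$ is the minimum of $\mathrm{imp}(\alpha)$ over all interval representations $\alpha$ of $G$. A local component at $z$ is a connected component of $G\setminus\{z\}$; it is exterior iff it contains a vertex not adjacent to $z$. If $z$ has $n$ local components, the weight $\mathrm{wt}(z)$ is the sum of the $n-2$ smallest orders among the non-exterior local components at $z$ ($0$ if $n\le2$). The weight $\mathrm{wt}(G)$ is the maximum of $\mathrm{wt}(z)$ over all vertices $z$. *)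

(* Defs.v *)
From HB Require Import structures.
From mathcomp Require Import all_boot all_order all_algebra.
Set Implicit Arguments. Unset Strict Implicit. Unset Printing Implicit Defensive.
Import Order.TTheory GRing.Theory Num.Theory.

Definition simple_graph (T : finType) (e : rel T) : Prop :=
  symmetric e /\ irreflexive e.

Definition connected_graph (T : finType) (e : rel T) : Prop :=
  forall x y : T, connect e x y.

(* An interval representation: v |-> I_v = [lo v, hi v] (closed, bounded,
   nonempty), with vw an edge iff I_v and I_w intersect (v <> w). *)
Definition interval_rep (R : realFieldType) (T : finType) (e : rel T)
    (lo hi : T -> R) : Prop :=
  (forall v, (lo v <= hi v)%R) /\
  (forall v w, v != w -> (e v w <-> ((lo v <= hi w) && (lo w <= hi v))%R)).

Definition is_interval_graph (R : realFieldType) (T : finType) (e : rel T) : Prop :=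
  exists lo hi : T -> R, interval_rep e lo hi.

Definition imp_at (R : realFieldType) (T : finType) (lo hi : T -> R) (z : T) : nat :=
  #|[pred w | (w != z) && ((lo z <= lo w) && (hi w <= hi z))%R]|.

Definition imp_rep (R : realFieldType) (T : finType) (lo hi : T -> R) : nat :=
  \max_(z : T) imp_at lo hi z.

Definition del_rel (T : finType) (e : rel T) (z : T) : rel T :=
  fun x y => [&& e x y, x != z & y != z].

Definition local_components (T : finType) (e : rel T) (z : T) : {set {set T}} :=
  [set [set y | (y != z) && connect (del_rel e z) x y] | x in [set x | x != z]].

Definition exterior (T : finType) (e : rel T) (z : T) (C : {set T}) : bool :=
  [exists v in C, ~~ e z v].

(* wt(z): sum of the n-2 smallest orders among non-exterior local components
   (0 if n <= 2, which is automatic since n - 2 = 0 in nat). *)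
Definition wt_at (T : finType) (e : rel T) (z : T) : nat :=
  let LC := local_components e z in
  let n := #|LC| in
  let s := sort leq [seq #|C| | C : {set T} <- enum [set C in LC | ~~ exterior e z C]] in
  sumn (take (n - 2) s).

Definition wt (T : finType) (e : rel T) : nat := \max_(z : T) wt_at e z.

(* Main.v *)
Require Import Defs.
From HB Require Import structures.
From mathcomp Require Import all_boot all_order all_algebra.
From mathcomp Require Import lra zify.
Set Implicit Arguments. Unset Strict Implicit. Unset Printing Implicit Defensive.
Import Order.TTheory GRing.Theory Num.Theory.
Lemma swap_front (a : nat) w1 w2 k : all (fun b => a <= b) w1 ->
  sumn (take k (a :: w1 ++ w2)) <= sumn (take k (w1 ++ a :: w2)).
Proof.
elim: w1 k => [|b w1 IH] k /=; first by [].
move=> /andP[ab hall]; case: k => [|k] //=.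
have := IH k hall.
case: k => [|j] /=; first by lia.
move=> h; lia.
Qed.

Lemma prefix_min (u w : seq nat) : sorted leq u -> perm_eq u w ->
  forall k, sumn (take k u) <= sumn (take k w).
Proof.
elim: u w => [|a u IH] w.
  by move=> _ _ k; case: k.
move=> su puw k.
have aw : a \in w by rewrite -(perm_mem puw) mem_head.
case/splitPr: aw puw => w1 w2 puw.
have pu : perm_eq u (w1 ++ w2).
  by rewrite -(perm_cons a); apply: (perm_trans puw); rewrite -[a :: _]/([:: a] ++ _) perm_catCA.
have hu : all (leq a) u by apply: (order_path_min leq_trans su).
have hw1 : all (fun b => a <= b) w1.
  apply/allP => b bw1.
  have : b \in a :: u by rewrite (perm_mem puw) mem_cat bw1.
  rewrite inE => /orP[/eqP -> //|bu]; exact: (allP hu).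
apply: leq_trans (swap_front w2 k hw1).
case: k => [|k] //=.
rewrite leq_add2l; apply: IH => //.
exact: (path_sorted su).
Qed.

Lemma sort_prefix (s t r : seq nat) k : perm_eq s (t ++ r) -> k <= size t ->
  sumn (take k (sort leq s)) <= sumn t.
Proof.
move=> pst kt.
have h := prefix_min (sort_sorted leq_total s) (perm_trans (permEl (perm_sort leq s)) pst) k.
apply: leq_trans h _.
rewrite take_cat; case: ifP => _.
  by rewrite -{2}(cat_take_drop k t) sumn_cat leq_addr.
have -> : k - size t = 0 by lia.
by rewrite take0 cats0.
Qed.

Lemma stick_left (R : realFieldType) (T : finType) (e : rel T) (lo hi : T -> R) (z v : T) :
  simple_graph e -> connected_graph e -> interval_rep e lo hi -> v != z -> (lo v < lo z)%R ->
  exists u, [/\ connect (del_rel e z) v u, u != z & (lo u <= lo z)%R && (lo z <= hi u)%R].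
Proof.
move=> [esym eirr] conn [lohi iedge] vz lvz.
case: (boolP [exists u, [&& connect (del_rel e z) v u, u != z & (lo u <= lo z)%R && (lo z <= hi u)%R]]).
  by case/existsP => u /and3P[? ? ?]; exists u.
rewrite negb_exists => /forallP H.
have key : forall p x, connect (del_rel e z) v x -> x != z -> (hi x < lo z)%R ->
    path e x p -> last x p != z.
  elim=> [|y p IH] x cvx xz hx /=; first done.
  case/andP => exy pyp.
  have xy : x != y by apply: contraTneq exy => ->; rewrite eirr.
  have [/(_ exy) /andP[h1 h2] _] := iedge x y xy.
  have [yz|yz] := eqVneq y z.
    by subst y; lra.
  have cvy : connect (del_rel e z) v y.
    by apply: connect_trans cvx (connect1 _); rewrite /del_rel exy xz yz.
  apply: IH pyp => //.
  have := H y; rewrite cvy yz /= negb_and => /orP[] h; lra.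
have /connectP [p pp lp] := conn v z.
have hv : (hi v < lo z)%R.
  have := H v; rewrite connect0 vz /= negb_and => /orP[] h; lra.
by move: (key p v (connect0 _ _) vz hv pp); rewrite -lp eqxx.
Qed.

Definition comp (T : finType) (e : rel T) (z x : T) : {set T} :=
  [set y | (y != z) && connect (del_rel e z) x y].

Lemma del_sym (T : finType) (e : rel T) z : symmetric e -> connect_sym (del_rel e z).
Proof.
move=> es; apply: sym_connect_sym => x y; rewrite /del_rel es.
by case: (y != z); case: (x != z); rewrite ?andbF ?andbT.
Qed.

Lemma in_LC (T : finType) (e : rel T) z C : C \in local_components e z ->
  exists2 x, x != z & C = comp e z x.
Proof. by case/imsetP => x; rewrite inE => xz ->; exists x. Qed.

Lemma comp_eq (T : finType) (e : rel T) z C1 C2 y1 y2 : symmetric e ->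
  C1 \in local_components e z -> C2 \in local_components e z ->
  y1 \in C1 -> y2 \in C2 -> connect (del_rel e z) y1 y2 -> C1 = C2.
Proof.
move=> es /in_LC[x1 _ ->] /in_LC[x2 _ ->].
rewrite !inE => /andP[_ c1] /andP[_ c2] c12.
have c : connect (del_rel e z) x1 x2.
  apply: connect_trans (connect_trans c1 c12) _.
  by rewrite (del_sym z es).
by apply/setP => w; rewrite !inE (same_connect (del_sym z es) c).
Qed.

Lemma comp_mem (T : finType) (e : rel T) z C v u :
  C \in local_components e z -> v \in C -> connect (del_rel e z) v u -> u != z -> u \in C.
Proof.
move=> /in_LC[x _ ->]; rewrite !inE => /andP[_ c] cu uz.
by rewrite uz (connect_trans c cu).
Qed.

Lemma side_le1 (R : realFieldType) (T : finType) (e : rel T) (lo hi : T -> R) (z : T) :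
  simple_graph e -> connected_graph e -> interval_rep e lo hi ->
  #|[set C in local_components e z | [exists v in C, (lo v < lo z)%R]]| <= 1.
Proof.
move=> sg conn ir; have [es eirr] := sg; have [lohi iedge] := ir.
apply/card_le1_eqP => C1 C2; rewrite !inE.
move=> /andP[L1 /existsP[v1 /andP[v1C lv1]]] /andP[L2 /existsP[v2 /andP[v2C lv2]]].
have v1z : v1 != z by move: v1C; case/in_LC: L1 => x _ ->; rewrite inE => /andP[].
have v2z : v2 != z by move: v2C; case/in_LC: L2 => x _ ->; rewrite inE => /andP[].
have [u1 [c1 u1z /andP[a1 b1]]] := stick_left sg conn ir v1z lv1.
have [u2 [c2 u2z /andP[a2 b2]]] := stick_left sg conn ir v2z lv2.
symmetry; apply: (comp_eq es L1 L2 (comp_mem L1 v1C c1 u1z) (comp_mem L2 v2C c2 u2z)).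
have [->|u12] := eqVneq u1 u2; first exact: connect0.
apply: connect1; rewrite /del_rel u1z u2z !andbT.
by apply (iedge u1 u2 u12).2; apply/andP; split; lra.
Qed.

Lemma neg_rep (R : realFieldType) (T : finType) (e : rel T) (lo hi : T -> R) :
  interval_rep e lo hi -> interval_rep e (fun x => - hi x)%R (fun x => - lo x)%R.
Proof.
move=> [lohi iedge]; split => [v|v w vw]; first by rewrite lerN2.
by rewrite iedge // !lerN2 andbC.
Qed.

Lemma wt_at_le (R : realFieldType) (T : finType) (e : rel T) (lo hi : T -> R) (z : T) :
  simple_graph e -> connected_graph e -> interval_rep e lo hi ->
  wt_at e z <= imp_at lo hi z.
Proof.
move=> sg conn ir; have [es eirr] := sg; have [lohi iedge] := ir.
rewrite /wt_at; cbv zeta.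
set LC := local_components e z.
set NE := [set C in LC | ~~ exterior e z C].
set Good := [set C in LC | [forall v in C, (lo z <= lo v)%R && (hi v <= hi z)%R]].
have memz : forall C y, C \in LC -> y \in C -> y != z.
  by move=> C y /in_LC[x _ ->]; rewrite inE => /andP[].
have GLC : Good \subset LC by apply/subsetP => C; rewrite inE => /andP[].
have GNE : Good \subset NE.
  apply/subsetP => C; rewrite !inE => /andP[CL /forall_inP H]; rewrite CL /=.
  rewrite /exterior negb_exists_in; apply/forall_inP => v vC; rewrite negbK.
  have vz := memz C v CL vC; have /andP[h1 h2] := H v vC; have := lohi v => h3.
  rewrite es; apply (iedge v z vz).2; apply/andP; split; lra.
set Ls := [set C in LC | [exists v in C, (lo v < lo z)%R]].
set Rs := [set C in LC | [exists v in C, (hi z < hi v)%R]].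
have hL : #|Ls| <= 1 by apply: side_le1.
have hR : #|Rs| <= 1.
  have := side_le1 z sg conn (neg_rep ir).
  congr (_ <= _); apply: eq_card => C; rewrite !inE; congr (_ && _).
  by apply: eq_existsb => v; rewrite ltrN2.
have hB : LC :\: Good \subset Ls :|: Rs.
  apply/subsetP => C; rewrite !inE => /andP[/negbTE nG CL]; rewrite CL /= in nG *.
  move: nG; move/negbT; rewrite negb_forall_in => /exists_inP[v vC].
  rewrite negb_and => hv.
  case/orP: hv => hv; [apply/orP; left|apply/orP; right]; apply/exists_inP; exists v => //; lra.
have hcard : #|LC| - 2 <= #|Good|.
  have h1 := cardsID Good LC; move/setIidPr: (GLC) => h2; rewrite h2 in h1.
  have h3 := subset_leq_card hB; have [hU _] := leq_card_setU Ls Rs.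
  move: h1 h3 hU hL hR; set a := #|Good|; set b := #|LC :\: Good|; set c := #|Ls :|: Rs|.
  set d := #|Ls|; set f := #|Rs|; set g := #|LC|. clearbody a b c d f g. lia.
have perm : perm_eq (enum NE) (enum Good ++ enum (NE :\: Good)).
  apply: uniq_perm; first exact: enum_uniq.
    rewrite cat_uniq !enum_uniq andbT /=; apply/hasPn => C.
    by rewrite !mem_enum !inE => /andP[/negbTE ->].
  move=> C; rewrite mem_cat !mem_enum in_setD.
  case CG: (C \in Good) => /=.
    exact: subsetP GNE C CG.
  by [].
have hsz : #|LC| - 2 <= size [seq #|C| | C : {set T} <- enum Good] by rewrite size_map -cardE.
have pm := perm_map (fun C : {set T} => #|C|) perm; rewrite map_cat in pm.
apply: leq_trans (sort_prefix pm hsz) _.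
rewrite sumnE big_map big_enum /=.
have triv : trivIset Good.
  apply/trivIsetP => A B AG BG AB; rewrite -setI_eq0; apply/eqP/setP => y; rewrite !inE.
  apply/negP => /andP[yA yB].
  move/negP: AB; apply; apply/eqP.
  apply: (comp_eq es (subsetP GLC A AG) (subsetP GLC B BG) yA yB (connect0 _ _)).
move/eqP: triv => ->.
apply: subset_leq_card; apply/subsetP => y /bigcupP[C CG yC].
have := CG; rewrite inE => /andP[CL /forall_inP H].
by rewrite inE /= (memz C y CL yC) /= (H y yC).
Qed.

Theorem corollary2p3 (R : realFieldType) (T : finType) (e : rel T) :
  simple_graph e -> connected_graph e ->
  is_interval_graph R e ->
  forall lo hi : T -> R, interval_rep e lo hi ->
  wt e <= imp_rep lo hi.
Proof.
move=> sg conn _ lo hi ir.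
apply/bigmax_leqP => z _.
apply: leq_trans (wt_at_le z sg conn ir) _.
rewrite /imp_rep; exact: leq_bigmax.
Qed.
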